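(* Let $\bm A=(A_1,\dots,A_d)$ be Hermitian matrices in $M_n(\mathbb{C})$, $B\in M_n(\mathbb{C})$, and $(\bm\lambda,\nu)\in\mathbb{R}^d\times\mathbb{C}$. Then $$\left|\dot\mu^{C}_{(\bm\lambda,\nu)}(\bm A,B)-\mu^{Q}_{(\bm\lambda,\nu)}(\bm A,B)\right|\le\sqrt{\sum_{i<j}\|[A_i,A_j]\|+\|F_{(\bm\lambda,\nu)}(\bm A,B)\|}.$$
   Context: Let $n,d,m$ be positive integers. Fix Hermitian matrices $\Gamma_1,\dots,\Gamma_d\in M_{2m}(\mathbb{C})$ with $\Gamma_i^2=I_{2m}$ and $\Gamma_i\Gamma_j=-\Gamma_j\Gamma_i$ for $i\neq j$ (a Clifford representation; the paper uses a specific one built from Pauli matrices). Write $P=\begin{bmatrix} I_m&0\\0&0_m\end{bmatrix}$ and $Q=\begin{bmatrix}0_m&0\\0&I_m\end{bmatrix}$ in $M_{2m}(\mathbb{C})$. For a $d$-tuple $\bm A=(A_1,\dots,A_d)$ of Hermitian matrices in $M_n(\mathbb{C})$, a matrix $B\in M_n(\mathbb{C})$ (not necessarily Hermitian or normal), and a probe site $(\bm\lambda,\nu)\in\mathbb{R}^d\times\mathbb{C}$, the non-Hermitian spectral localizer is $$L_{(\bm\lambda,\nu)}(\bm A,B)=\sum_{i=1}^d (A_i-\lambda_i I)\otimes\Gamma_i+(B-\nu I)\otimes P-(B-\nu I)^\dagger\otimes Q\in M_{2mn}(\mathbb{C}).$$ The Clifford radial gap is $\dot\mu^{C}_{(\bm\lambda,\nu)}(\bm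 A,B)=\sigma_{\min}\big(L_{(\bm\lambda,\nu)}(\bm A,B)\big)$. Define $$F_{(\bm\lambda,\nu)}(\bm A,B)=\sum_{i=1}^d\big(G_i+G_i^\dagger\big)-\sum_{i=1}^d\big(H_i+H_i^\dagger\big),\quad G_i=(A_i-\lambda_i I)(B-\nu I)\otimes\Gamma_iP,\quad H_i=(A_i-\lambda_i I)(B-\nu I)^\dagger\otimes\Gamma_iQ.$$ The quadratic gap (with one non-Hermitian matrix) is $\mu^{Q}_{(\bm\lambda,\nu)}(\bm A,B)=\sqrt{\lambda_{\min}(Q_{(\bm\lambda,\nu)}(\bm A,B))}$, where $Q_{(\bm\lambda,\nu)}(\bm A,B)=RQ\otimes\begin{bmatrix}1&0\\0&0\end{bmatrix}+LQ\otimes\begin{bmatrix}0&0\\0&1\end{bmatrix}$ with $RQ=\sum_{i=1}^d(A_i-\lambda_iI)^2+(B-\nu I)^\dagger(B-\nu I)$ and $LQ=\sum_{i=1}^d(A_i-\lambda_iI)^2+(B-\nu I)(B-\nu I)^\dagger$. Matrix norms are operator norms. *)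

(* Defs.v *)
From HB Require Import structures.
From mathcomp Require Import all_boot all_order all_algebra.
From mathcomp Require Import classical_sets reals.
From mathcomp Require Import complex mxtens.
Set Implicit Arguments. Unset Strict Implicit. Unset Printing Implicit Defensive.
Import Order.TTheory GRing.Theory Num.Theory.
Local Open Scope ring_scope.
Local Open Scope classical_set_scope.

Section Defs.
Variable R : realType.
Local Notation C := R[i].

Definition mxadj {k l : nat} (M : 'M[C]_(k, l)) : 'M[C]_(l, k) :=
  (map_mx (@conjc R) M)^T.

Definition is_hermitian {k : nat} (M : 'M[C]_k) : Prop := mxadj M = M.

Definition vnorm {k : nat} (x : 'cV[C]_k) : R :=
  Num.sqrt (\sum_(i < k) (Normc.normc (x i 0)) ^+ 2).

Definition opnorm {k l : nat} (M : 'M[C]_(k, l)) : R :=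
  sup [set vnorm (M *m x) | x in [set x : 'cV[C]_l | vnorm x = 1]].

Definition lambda_min {k : nat} (M : 'M[C]_k) : R :=
  inf [set r : R | eigenvalue M (r%:C)%C].

Definition sigma_min {k : nat} (M : 'M[C]_k) : R :=
  Num.sqrt (lambda_min (mxadj M *m M)).

Definition projP (m : nat) : 'M[C]_(m + m) := block_mx 1%:M 0 0 0.
Definition projQ (m : nat) : 'M[C]_(m + m) := block_mx 0 0 0 1%:M.

Definition is_clifford (d m : nat) (Gamma : 'I_d -> 'M[C]_(m + m)) : Prop :=
  (forall i, is_hermitian (Gamma i)) /\
  (forall i, Gamma i *m Gamma i = 1%:M) /\
  (forall i j, i != j -> Gamma i *m Gamma j = - (Gamma j *m Gamma i)).

Definition shiftA {n d : nat} (A : 'I_d -> 'M[C]_n) (lam : 'I_d -> R)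
  (i : 'I_d) : 'M[C]_n := A i - ((lam i)%:C)%C%:M.

Definition shiftB {n : nat} (B : 'M[C]_n) (nu : C) : 'M[C]_n := B - nu%:M.

Definition localizer {n d m : nat} (Gamma : 'I_d -> 'M[C]_(m + m))
  (A : 'I_d -> 'M[C]_n) (B : 'M[C]_n) (lam : 'I_d -> R) (nu : C)
  : 'M[C]_(n * (m + m)) :=
  \sum_(i < d) (shiftA A lam i *t Gamma i)
  + (shiftB B nu *t projP m) - (mxadj (shiftB B nu) *t projQ m).

Definition clifford_gap {n d m : nat} (Gamma : 'I_d -> 'M[C]_(m + m))
  (A : 'I_d -> 'M[C]_n) (B : 'M[C]_n) (lam : 'I_d -> R) (nu : C) : R :=
  sigma_min (localizer Gamma A B lam nu).

Definition Fmat {n d m : nat} (Gamma : 'I_d -> 'M[C]_(m + m))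
  (A : 'I_d -> 'M[C]_n) (B : 'M[C]_n) (lam : 'I_d -> R) (nu : C)
  : 'M[C]_(n * (m + m)) :=
  let G i := (shiftA A lam i *m shiftB B nu) *t (Gamma i *m projP m) in
  let H i := (shiftA A lam i *m mxadj (shiftB B nu)) *t (Gamma i *m projQ m) in
  \sum_(i < d) (G i + mxadj (G i)) - \sum_(i < d) (H i + mxadj (H i)).

Definition RQ {n d : nat} (A : 'I_d -> 'M[C]_n) (B : 'M[C]_n)
  (lam : 'I_d -> R) (nu : C) : 'M[C]_n :=
  \sum_(i < d) (shiftA A lam i *m shiftA A lam i)
  + mxadj (shiftB B nu) *m shiftB B nu.

Definition LQ {n d : nat} (A : 'I_d -> 'M[C]_n) (B : 'M[C]_n)
  (lam : 'I_d -> R) (nu : C) : 'M[C]_n :=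
  \sum_(i < d) (shiftA A lam i *m shiftA A lam i)
  + shiftB B nu *m mxadj (shiftB B nu).

Definition Qmat {n d : nat} (A : 'I_d -> 'M[C]_n) (B : 'M[C]_n)
  (lam : 'I_d -> R) (nu : C) : 'M[C]_(n * 2) :=
  RQ A B lam nu *t (delta_mx 0 0 : 'M[C]_2)
  + LQ A B lam nu *t (delta_mx 1 1 : 'M[C]_2).

Definition quadratic_gap {n d : nat} (A : 'I_d -> 'M[C]_n) (B : 'M[C]_n)
  (lam : 'I_d -> R) (nu : C) : R :=
  Num.sqrt (lambda_min (Qmat A B lam nu)).

End Defs.

(* Main.v *)
Require Import Defs.
From HB Require Import structures.
From mathcomp Require Import all_boot all_order all_algebra.
From mathcomp Require Import classical_sets reals.
From mathcomp Require Import complex mxtens.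
From mathcomp Require Import spectral sesquilinear.
From mathcomp Require Import ring lra.
Import Order.TTheory GRing.Theory Num.Theory.
Local Open Scope ring_scope.
Set Implicit Arguments. Unset Strict Implicit. Unset Printing Implicit Defensive.

Section S.
Variable R : realType.
Local Notation C := R[i].

Lemma adE k l (M : 'M[C]_(k,l)) : mxadj M = map_mx Num.conj (M^T).
Proof. by rewrite /mxadj map_trmx. Qed.

Lemma ad_entry k l (M : 'M[C]_(k,l)) i j : mxadj M i j = conjc (M j i).
Proof. by rewrite /mxadj !mxE. Qed.

Lemma adK k l (M : 'M[C]_(k,l)) : mxadj (mxadj M) = M.
Proof. by apply/matrixP=> i j; rewrite !ad_entry conjcK. Qed.

Lemma adD k l (M N : 'M[C]_(k,l)) : mxadj (M + N) = mxadj M + mxadj N.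
Proof. by apply/matrixP=> i j; rewrite !mxE rmorphD. Qed.

Lemma adN k l (M : 'M[C]_(k,l)) : mxadj (- M) = - mxadj M.
Proof. by apply/matrixP=> i j; rewrite !mxE rmorphN. Qed.

Lemma adB k l (M N : 'M[C]_(k,l)) : mxadj (M - N) = mxadj M - mxadj N.
Proof. by rewrite adD adN. Qed.

Lemma ad0 k l : mxadj (0 : 'M[C]_(k,l)) = 0.
Proof. by apply/matrixP=> i j; rewrite !mxE conjc0. Qed.

Lemma ad_sum k l (I : finType) (P : pred I) (F : I -> 'M[C]_(k,l)) :
  mxadj (\sum_(i | P i) F i) = \sum_(i | P i) mxadj (F i).
Proof. by apply: (big_morph _ (@adD k l) (@ad0 k l)). Qed.

Lemma adM k l p (M : 'M[C]_(k,l)) (N : 'M[C]_(l,p)) :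
  mxadj (M *m N) = mxadj N *m mxadj M.
Proof.
apply/matrixP=> i j; rewrite !mxE rmorph_sum; apply: eq_bigr=> r _.
by rewrite !ad_entry rmorphM mulrC.
Qed.

Lemma ad1 k : mxadj (1%:M : 'M[C]_k) = 1%:M.
Proof.
by apply/matrixP=> i j; rewrite !mxE conjc_nat eq_sym.
Qed.

Lemma ad_tens k l p q (M : 'M[C]_(k,l)) (N : 'M[C]_(p,q)) :
  mxadj (M *t N) = mxadj M *t mxadj N.
Proof.
apply/matrixP=> i j.
case: (mxtens_indexP i)=> i0 i1; case: (mxtens_indexP j)=> j0 j1.
by rewrite ad_entry !tensmxE !ad_entry rmorphM.
Qed.

Lemma tensmxDl k l p q (M1 M2 : 'M[C]_(k,l)) (N : 'M[C]_(p,q)) :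
  (M1 + M2) *t N = M1 *t N + M2 *t N.
Proof.
apply/matrixP=> i j.
case: (mxtens_indexP i)=> i0 i1; case: (mxtens_indexP j)=> j0 j1.
by rewrite tensmxE [in RHS]mxE !tensmxE mxE mulrDl.
Qed.

Lemma tensmxDr k l p q (M : 'M[C]_(k,l)) (N1 N2 : 'M[C]_(p,q)) :
  M *t (N1 + N2) = M *t N1 + M *t N2.
Proof.
apply/matrixP=> i j.
case: (mxtens_indexP i)=> i0 i1; case: (mxtens_indexP j)=> j0 j1.
by rewrite tensmxE [in RHS]mxE !tensmxE mxE mulrDr.
Qed.

Lemma tensmxNl k l p q (M : 'M[C]_(k,l)) (N : 'M[C]_(p,q)) :
  (- M) *t N = - (M *t N).
Proof.
apply/matrixP=> i j.
case: (mxtens_indexP i)=> i0 i1; case: (mxtens_indexP j)=> j0 j1.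
by rewrite tensmxE [in RHS]mxE !tensmxE mxE mulNr.
Qed.

Lemma tensmxNr k l p q (M : 'M[C]_(k,l)) (N : 'M[C]_(p,q)) :
  M *t (- N) = - (M *t N).
Proof.
apply/matrixP=> i j.
case: (mxtens_indexP i)=> i0 i1; case: (mxtens_indexP j)=> j0 j1.
by rewrite tensmxE [in RHS]mxE !tensmxE mxE mulrN.
Qed.

Lemma tensmx_suml k l p q (I : finType) (P : pred I) (F : I -> 'M[C]_(k,l))
  (N : 'M[C]_(p,q)) :
  (\sum_(i | P i) F i) *t N = \sum_(i | P i) (F i *t N).
Proof.
apply: (big_morph (fun M => M *t N)); first by move=> ? ?; exact: tensmxDl.
exact: tens0mx.
Qed.

Lemma tensmx_sumr k l p q (I : finType) (P : pred I) (F : I -> 'M[C]_(p,q))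
  (M : 'M[C]_(k,l)) :
  M *t (\sum_(i | P i) F i) = \sum_(i | P i) (M *t F i).
Proof.
apply: (big_morph (fun N => M *t N)); first by move=> ? ?; exact: tensmxDr.
exact: tensmx0.
Qed.

Lemma mxtens_index_inj k l : injective (@mxtens_index k l).
Proof. exact: can_inj (@mxtens_indexK k l). Qed.

Lemma tens11 k l : (1%:M : 'M[C]_k) *t (1%:M : 'M[C]_l) = 1%:M.
Proof.
apply/matrixP=> i j.
case: (mxtens_indexP i)=> i0 i1; case: (mxtens_indexP j)=> j0 j1.
rewrite tensmxE !mxE (inj_eq (@mxtens_index_inj k l)) xpair_eqE.
by case: (i0 == j0); case: (i1 == j1); rewrite ?mulr1 ?mulr0 ?mul0r.
Qed.

End S.

Section S.
Variable R : realType.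
Local Notation C := R[i].

Definition dotc k (x y : 'cV[C]_k) : C := (mxadj x *m y) 0 0.
Definition qf k (M : 'M[C]_k) (x : 'cV[C]_k) : R := complex.Re (dotc x (M *m x)).
Definition nsq k (x : 'cV[C]_k) : R := complex.Re (dotc x x).

Lemma dotcE k (x y : 'cV[C]_k) : dotc x y = \sum_i conjc (x i 0) * y i 0.
Proof. by rewrite /dotc mxE; apply: eq_bigr => i _; rewrite ad_entry. Qed.

Lemma Re_sum (I : finType) (P : pred I) (F : I -> C) :
  complex.Re (\sum_(i | P i) F i) = \sum_(i | P i) complex.Re (F i).
Proof. exact: raddf_sum. Qed.

Lemma ReD (a b : C) : complex.Re (a + b) = complex.Re a + complex.Re b.
Proof. exact: raddfD. Qed.
Lemma ReN (a : C) : complex.Re (- a) = - complex.Re a.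
Proof. exact: raddfN. Qed.

Lemma Re_conj_mul (z w : C) : complex.Re (conjc z * w) = complex.Re z * complex.Re w + complex.Im z * complex.Im w.
Proof. by case: z => a b; case: w => c e /=; ring. Qed.

Lemma Re_mulRc (r : R) (z : C) : complex.Re ((r%:C)%C * z) = r * complex.Re z.
Proof. by case: z => a b /=; ring. Qed.

Lemma nsqE k (x : 'cV[C]_k) :
  nsq x = \sum_i (complex.Re (x i 0) ^+ 2 + complex.Im (x i 0) ^+ 2).
Proof.
rewrite /nsq dotcE Re_sum; apply: eq_bigr => i _.
by rewrite Re_conj_mul !expr2.
Qed.

Lemma nsq_ge0 k (x : 'cV[C]_k) : 0 <= nsq x.
Proof. by rewrite nsqE sumr_ge0 // => i _; rewrite addr_ge0 ?sqr_ge0. Qed.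

Lemma nsq_eq0 k (x : 'cV[C]_k) : nsq x = 0 -> x = 0.
Proof.
rewrite nsqE => /eqP; rewrite psumr_eq0; last first.
  by move=> i _; rewrite addr_ge0 ?sqr_ge0.
move=> /allP H; apply/matrixP => i j; rewrite [j]ord1 mxE.
have /implyP := H i (mem_index_enum _) => /(_ isT) /eqP.
move/eqP; rewrite paddr_eq0 ?sqr_ge0 // !sqrf_eq0 => /andP[/eqP h1 /eqP h2].
by case: (x i 0) h1 h2 => a b /= -> ->.
Qed.

Lemma vnormE k (x : 'cV[C]_k) : vnorm x = Num.sqrt (nsq x).
Proof.
rewrite /vnorm nsqE; congr Num.sqrt; apply: eq_bigr => i _.
case: (x i 0) => a b /=; rewrite sqr_sqrtr //.
by rewrite addr_ge0 ?sqr_ge0.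
Qed.

Lemma cs_real k (a b c e : 'I_k -> R) :
  (\sum_i (a i * c i + b i * e i)) ^+ 2 <=
  (\sum_i (a i ^+ 2 + b i ^+ 2)) * (\sum_i (c i ^+ 2 + e i ^+ 2)).
Proof.
set A := \sum_i (a i ^+ 2 + _); set B := \sum_i (a i * c i + _); set Cc := \sum_i (c i ^+ 2 + _).
have A0 : 0 <= A by rewrite sumr_ge0 // => i _; rewrite addr_ge0 ?sqr_ge0.
have C0 : 0 <= Cc by rewrite sumr_ge0 // => i _; rewrite addr_ge0 ?sqr_ge0.
have key t : 0 <= Cc - 2 * t * B + t ^+ 2 * A.
  have -> : Cc - 2 * t * B + t ^+ 2 * A =
     \sum_i ((c i - t * a i) ^+ 2 + (e i - t * b i) ^+ 2).
    symmetry; rewrite (eq_bigr (fun i => (c i ^+ 2 + e i ^+ 2)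
       - 2 * t * (a i * c i + b i * e i) + t ^+ 2 * (a i ^+ 2 + b i ^+ 2)));
       last by move=> i _; ring.
    by rewrite big_split sumrB /= -!mulr_sumr.
  by rewrite sumr_ge0 // => i _; rewrite addr_ge0 ?sqr_ge0.
have [A_eq0|A_gt0] := eqVneq A 0.
  have B0 : B = 0.
    move: A_eq0 => /eqP; rewrite psumr_eq0; last first.
      by move=> i _; rewrite addr_ge0 ?sqr_ge0.
    move=> /allP H; rewrite /B big1 // => i _.
    have /implyP := H i (mem_index_enum _) => /(_ isT).
    rewrite paddr_eq0 ?sqr_ge0 // !sqrf_eq0 => /andP[/eqP -> /eqP ->].
    by rewrite !mul0r addr0.
  by rewrite B0 A_eq0 expr0n /= mul0r.
have Ap : 0 < A by rewrite lt_def A_gt0 A0.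
have := key (B / A).
set u := B / A.
have -> : B = u * A by rewrite /u divfK.
move=> h.
have : 0 <= A * (Cc - 2 * u * (u * A) + u ^+ 2 * A) by rewrite mulr_ge0 // ltW.
move=> h2; nra.
Qed.

Lemma Re_dotcE k (x y : 'cV[C]_k) : complex.Re (dotc x y) =
  \sum_i (complex.Re (x i 0) * complex.Re (y i 0) + complex.Im (x i 0) * complex.Im (y i 0)).
Proof. by rewrite dotcE Re_sum; apply: eq_bigr => i _; rewrite Re_conj_mul. Qed.

Lemma cs k (x y : 'cV[C]_k) : complex.Re (dotc x y) ^+ 2 <= nsq x * nsq y.
Proof. by rewrite Re_dotcE !nsqE; apply: cs_real. Qed.

Lemma cs_abs k (x y : 'cV[C]_k) : nsq x = 1 -> `|complex.Re (dotc x y)| <= vnorm y.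
Proof.
move=> x1; rewrite vnormE -sqrtr_sqr ler_sqrt ?nsq_ge0 //.
by have := cs x y; rewrite x1 mul1r.
Qed.

End S.

Section S.
Variable R : realType.
Local Notation C := R[i].

Lemma sum_tens (V : nmodType) k p (F : 'I_(k * p) -> V) :
  \sum_i F i = \sum_(a < k) \sum_(b < p) F (mxtens_index (a, b)).
Proof.
rewrite pair_big /=.
rewrite (reindex (@mxtens_index k p)) /=; last first.
  by exists (@mxtens_unindex k p) => x _; rewrite ?mxtens_indexK ?mxtens_unindexK.
by apply: eq_bigr => -[a b] _.
Qed.

Definition sl k p (x : 'cV[C]_(k * p)) (b : 'I_p) : 'cV[C]_k :=
  \col_a x (mxtens_index (a, b)) 0.

Definition mk k p (f : 'I_p -> 'cV[C]_k) : 'cV[C]_(k * p) :=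
  \col_i f (mxtens_unindex i).2 (mxtens_unindex i).1 0.

Lemma sl_mk k p (f : 'I_p -> 'cV[C]_k) b : sl (mk f) b = f b.
Proof. by apply/matrixP => a j; rewrite [j]ord1 !mxE mxtens_indexK. Qed.

Lemma dot_tens k p (M : 'M[C]_k) (D : 'M[C]_p) (x y : 'cV[C]_(k * p)) :
  dotc x ((M *t D) *m y) =
  \sum_b \sum_b' D b b' * dotc (sl x b) (M *m sl y b').
Proof.
transitivity (\sum_(b < p) \sum_(b' < p) \sum_(a < k) \sum_(c < k)
   (conjc (x (mxtens_index (a, b)) 0) * M a c * D b b' *
     y (mxtens_index (c, b')) 0)).
  rewrite dotcE sum_tens exchange_big /=; apply: eq_bigr => b _.
  rewrite (eq_bigr (fun a => \sum_(b' < p) \sum_(c < k)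
    (conjc (x (mxtens_index (a, b)) 0) * M a c * D b b' *
     y (mxtens_index (c, b')) 0))); last first.
    move=> a _; rewrite mxE sum_tens mulr_sumr exchange_big /=.
    apply: eq_bigr => b' _; rewrite mulr_sumr; apply: eq_bigr => c _.
    by rewrite tensmxE; ring.
  by rewrite exchange_big.
apply: eq_bigr => b _; apply: eq_bigr => b' _.
rewrite dotcE mulr_sumr; apply: eq_bigr => a _.
rewrite !mxE mulr_sumr mulr_sumr; apply: eq_bigr => c _.
by rewrite !mxE; ring.
Qed.

Lemma qfD k (M N : 'M[C]_k) x : qf (M + N) x = qf M x + qf N x.
Proof. by rewrite /qf /dotc mulmxDl mulmxDr mxE ReD. Qed.

Lemma qf0 k (x : 'cV[C]_k) : qf 0 x = 0.
Proof. by rewrite /qf /dotc mul0mx mulmx0 mxE. Qed.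

Lemma qfN k (M : 'M[C]_k) x : qf (- M) x = - qf M x.
Proof. by rewrite /qf /dotc mulNmx mulmxN mxE ReN. Qed.

Lemma qfB k (M N : 'M[C]_k) x : qf (M - N) x = qf M x - qf N x.
Proof. by rewrite qfD qfN. Qed.

Lemma qf_sum k (I : finType) (P : pred I) (F : I -> 'M[C]_k) x :
  qf (\sum_(i | P i) F i) x = \sum_(i | P i) qf (F i) x.
Proof. exact: (big_morph (fun M => qf M x) (fun M N => qfD M N x) (qf0 x)). Qed.

Lemma qf_adj k l (N : 'M[C]_(l,k)) x : qf (mxadj N *m N) x = nsq (N *m x).
Proof. by rewrite /qf /nsq /dotc adM !mulmxA. Qed.

Lemma nsq_qf k (x : 'cV[C]_k) : nsq x = qf 1%:M x.
Proof. by rewrite /qf mul1mx. Qed.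

Lemma qf_tens k p (M : 'M[C]_k) (D : 'M[C]_p) x :
  qf (M *t D) x = \sum_b \sum_b' complex.Re (D b b' * dotc (sl x b) (M *m sl x b')).
Proof. by rewrite /qf dot_tens Re_sum; apply: eq_bigr => b _; rewrite Re_sum. Qed.

Lemma sum_delta (p : nat) (b : 'I_p) (f : 'I_p -> R) :
  \sum_b' (b == b')%:R * f b' = f b.
Proof.
rewrite (bigD1 b) //= eqxx mul1r big1 ?addr0 // => b' /negbTE.
by rewrite eq_sym => ->; rewrite mul0r.
Qed.

Lemma qf_tens1 k p (M : 'M[C]_k) x :
  qf (M *t (1%:M : 'M_p)) x = \sum_b qf M (sl x b).
Proof.
rewrite qf_tens; apply: eq_bigr => b _.
rewrite (eq_bigr (fun b' => (b == b')%:R * qf M (sl x b'))) ?sum_delta //.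
move=> b' _; rewrite mxE; have [->|_] := eqVneq b b';
  by rewrite /= ?mulr1n ?mulr0n ?mul1r ?mul0r.
Qed.

Lemma nsq_tens k p (x : 'cV[C]_(k * p)) : nsq x = \sum_b nsq (sl x b).
Proof.
rewrite nsq_qf -tens11 qf_tens1; apply: eq_bigr => b _.
by rewrite -nsq_qf.
Qed.

End S.

Section S.
Variable R : realType.
Local Notation C := R[i].

Lemma adZ k l (a : C) (M : 'M[C]_(k,l)) : mxadj (a *: M) = conjc a *: mxadj M.
Proof. by apply/matrixP=> i j; rewrite !mxE rmorphM. Qed.

Lemma Re_conj_dy (d y : C) :
  complex.Re (conjc y * (d * y)) =
  complex.Re d * (complex.Re y ^+ 2 + complex.Im y ^+ 2).
Proof. by case: d => a b; case: y => c e /=; ring. Qed.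

Lemma dotcZ k (x y : 'cV[C]_k) a : dotc x (a *: y) = a * dotc x y.
Proof. by rewrite /dotc -scalemxAr mxE. Qed.

Lemma dotc_mul k (N : 'M[C]_k) (x y : 'cV[C]_k) :
  dotc x (mxadj N *m y) = dotc (N *m x) y.
Proof. by rewrite /dotc adM mulmxA. Qed.

Lemma spectral_bounds k (M : 'M[C]_k) : mxadj M = M -> (0 < k)%N ->
  [/\ forall x, lambda_min M * nsq x <= qf M x,
      exists x, nsq x = 1 /\ qf M x = lambda_min M &
      exists K, forall x, qf M x <= K * nsq x].
Proof.
move=> hM kpos.
have Mn : M \is normalmx by apply/normalmxP; rewrite -adE hM.
have Mh : M \is hermsymmx.
  by apply/is_hermitianmxP; rewrite expr0 scale1r -adE hM.
set P := spectralmx M; set d := spectral_diag M.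
have Pu : P \is unitarymx := spectral_unitarymx M.
have eM : M = mxadj P *m diag_mx d *m P.
  rewrite /P /d adE -invmx_unitary ?spectral_unitarymx //.
  exact/orthomx_spectralP.
have PPa : P *m mxadj P = 1%:M by rewrite adE; apply/unitarymxP.
have PaP : mxadj P *m P = 1%:M.
  by have := mulmxKtV (1%:M : 'M[C]_k) Pu erefl; rewrite mul1mx -adE.
pose w (x : 'cV[C]_k) j := complex.Re ((P *m x) j 0) ^+ 2 +
   complex.Im ((P *m x) j 0) ^+ 2.
have w_ge0 x j : 0 <= w x j by rewrite addr_ge0 ?sqr_ge0.
have qfE x : qf M x = \sum_j complex.Re (d 0 j) * w x j.
  rewrite /qf eM -!mulmxA dotc_mul dotcE Re_sum; apply: eq_bigr => j _.
  by rewrite mul_diag_mx /w; move: (P *m x) => y; rewrite mxE Re_conj_dy.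
have nsqE' x : nsq x = \sum_j w x j.
  rewrite /nsq -{2}(mul1mx x) -PaP -mulmxA dotc_mul.
  by rewrite -/(nsq (P *m x)) nsqE.
pose j0 := Ordinal kpos.
pose jm := [arg min_(j < j0) complex.Re (d 0 j)]%O.
pose jM := [arg max_(j > j0) complex.Re (d 0 j)]%O.
have jmP j : complex.Re (d 0 jm) <= complex.Re (d 0 j).
  by rewrite /jm; case: arg_minP => // i _; apply.
have jMP j : complex.Re (d 0 j) <= complex.Re (d 0 jM).
  by rewrite /jM; case: arg_maxP => // i _; apply.
set dm := complex.Re (d 0 jm).
have lowb x : dm * nsq x <= qf M x.
  rewrite qfE nsqE' mulr_sumr; apply: ler_sum => j _.
  by rewrite ler_wpM2r.
have dreal : d 0 jm = (dm%:C)%C.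
  have := hermitian_spectral_diag_real Mh => /mxOverP /(_ 0 jm).
  by move=> /RRe_real.
have dmS : eigenvalue M (dm%:C)%C.
  apply/eigenvalueP; exists (delta_mx 0 jm *m P).
    rewrite eM !mulmxA -(mulmxA _ P) PPa mulmx1 -dreal.
    rewrite scalemxAl; congr (_ *m _).
    apply/matrixP => i0 j; rewrite [i0]ord1 mul_mx_diag !mxE.
    by rewrite /=; case: (eqVneq j jm) => [->|]; rewrite ?mulr1n ?mulr0n ?mulr0 ?mulr1 ?mul0r ?eqxx /= ?mulr1 ?mul1r ?mulr0 ?mul0r.
  apply/eqP => /(congr1 (fun v => v *m mxadj P)).
  rewrite -mulmxA PPa mulmx1 mul0mx => /matrixP /(_ 0 jm).
  by rewrite !mxE !eqxx /= => /eqP; rewrite oner_eq0.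
have Slb r : eigenvalue M (r%:C)%C -> dm <= r.
  move=> /eigenvalueP [v vM vn0].
  pose x := mxadj v.
  have Mx : M *m x = (r%:C)%C *: x.
    by rewrite -{1}hM -adM vM adZ conjc_real.
  have xn0 : 0 < nsq x.
    rewrite lt_def nsq_ge0 andbT; apply/eqP => /nsq_eq0 x0.
    by move: vn0; rewrite -(adK v) -/x x0 ad0 eqxx.
  have := lowb x; rewrite /qf Mx dotcZ Re_mulRc -/(nsq x).
  by rewrite ler_pM2r.
have lamE : lambda_min M = dm.
  rewrite /lambda_min; apply/eqP; rewrite eq_le; apply/andP; split.
    have : has_lbound [set r : R | eigenvalue M (r%:C)%C].
      by exists dm => r /Slb.
    by move=> /ge_inf /(_ dm dmS).
  apply: lb_le_inf; first by exists dm.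
  by move=> r /Slb.
split.
- by rewrite lamE.
- pose e := (delta_mx jm 0 : 'cV[C]_k).
  exists (mxadj P *m e).
  have Pe : P *m (mxadj P *m e) = e.
    by rewrite mulmxA PPa mul1mx.
  have wE j : w (mxadj P *m e) j = (j == jm)%:R.
    rewrite /w Pe mxE; case: eqP => _ /=; rewrite ?mulr1n ?mulr0n /=.
      by rewrite expr1n expr0n addr0.
    by rewrite expr0n addr0.
  split.
    rewrite nsqE' (eq_bigr _ (fun j _ => wE j)).
    by rewrite (bigD1 jm) //= eqxx big1 ?addr0 // => j /negbTE ->.
  rewrite lamE qfE (eq_bigr _ (fun j _ => congr1 _ (wE j))).
  rewrite (bigD1 jm) //= eqxx mulr1 big1 ?addr0 // => j /negbTE ->.
  by rewrite mulr0.
- exists (complex.Re (d 0 jM)) => x.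
  rewrite qfE nsqE' mulr_sumr; apply: ler_sum => j _.
  by rewrite ler_wpM2r.
Qed.

End S.

Section S.
Variable R : realType.
Local Notation C := R[i].

Lemma nsq_delta k (j0 : 'I_k) : nsq (delta_mx j0 0 : 'cV[C]_k) = 1.
Proof.
rewrite nsqE (bigD1 j0) //= mxE !eqxx /= big1 ?addr0.
  by rewrite expr1n expr0n addr0.
move=> j /negbTE; rewrite mxE => ->; rewrite /=.
by rewrite expr0n addr0.
Qed.

Lemma nsq_cV0 (x : 'cV[C]_0) : nsq x = 0.
Proof. by rewrite nsqE big_ord0. Qed.

Lemma opnorm_ubound k l (M : 'M[C]_(k,l)) :
  has_ubound [set vnorm (M *m x) | x in [set x : 'cV[C]_l | vnorm x = 1]].
Proof.
case: l M => [|l] M.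
  exists 0 => r /= [x]; rewrite vnormE nsq_cV0 sqrtr0 => /esym /eqP.
  by rewrite oner_eq0.
have hM : mxadj (mxadj M *m M) = mxadj M *m M by rewrite adM adK.
have [_ _ [K hK]] := spectral_bounds hM (ltn0Sn l).
exists (Num.sqrt K) => r /= [x x1 <-].
have n1 : nsq x = 1.
  by move: x1; rewrite vnormE => h; rewrite -(sqr_sqrtr (nsq_ge0 x)) h expr1n.
rewrite vnormE ler_sqrt; last first.
  by have := hK x; rewrite n1 mulr1 qf_adj; apply/le_trans; rewrite nsq_ge0.
by have := hK x; rewrite qf_adj n1 mulr1.
Qed.

Lemma opnorm_ge k l (M : 'M[C]_(k,l)) x : nsq x = 1 ->
  vnorm (M *m x) <= opnorm M.
Proof.
move=> x1; apply: (ub_le_sup (opnorm_ubound M)).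
by exists x => //=; rewrite vnormE x1 sqrtr1.
Qed.

Lemma opnorm_ge0 k l (M : 'M[C]_(k,l)) : (0 < l)%N -> 0 <= opnorm M.
Proof.
move=> lpos; apply: le_trans (opnorm_ge M (nsq_delta (Ordinal lpos))).
by rewrite vnormE sqrtr_ge0.
Qed.

Lemma qf_opnorm k (M : 'M[C]_k) x : nsq x = 1 -> `|qf M x| <= opnorm M.
Proof. by move=> x1; apply: le_trans (cs_abs _ x1) (opnorm_ge M x1). Qed.

Lemma nsqZ k (c : R) (x : 'cV[C]_k) : nsq ((c%:C)%C *: x) = c ^+ 2 * nsq x.
Proof.
rewrite !nsqE mulr_sumr; apply: eq_bigr => i _; rewrite mxE.
by case: (x i 0) => a b /=; ring.
Qed.

Lemma opnorm_scale k l (M : 'M[C]_(k,l)) (u : 'cV[C]_l) : (0 < l)%N ->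
  nsq (M *m u) <= opnorm M ^+ 2 * nsq u.
Proof.
move=> lpos.
have [u0|] := eqVneq u 0; first by rewrite u0 mulmx0 /nsq /dotc !mulmx0 mxE /= mulr0.
move=> un0.
have up : 0 < nsq u.
  by rewrite lt_def nsq_ge0 andbT; apply/eqP => /nsq_eq0 /eqP; rewrite (negbTE un0).
set s := Num.sqrt (nsq u).
have sp : 0 < s by rewrite sqrtr_gt0.
have s2 : s ^+ 2 = nsq u by rewrite sqr_sqrtr // ltW.
pose u' := ((s^-1)%:C)%C *: u.
have u'1 : nsq u' = 1 by rewrite nsqZ exprVn s2 mulVf // gt_eqF.
have := opnorm_ge M u'1; rewrite vnormE.
rewrite -scalemxAr nsqZ -(ler_sqr (sqrtr_ge0 _) (opnorm_ge0 M lpos)).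
rewrite sqr_sqrtr; last by rewrite mulr_ge0 ?sqr_ge0 ?nsq_ge0.
rewrite exprVn s2 => h.
have ip : 0 < (nsq u)^-1 by rewrite invr_gt0.
by rewrite -(ler_pM2l ip) mulrCA mulVf ?gt_eqF // mulr1.
Qed.

Lemma qf_tens_unitary k p (M : 'M[C]_k) (G : 'M[C]_p) (x : 'cV[C]_(k * p)) :
  (0 < k)%N -> mxadj G *m G = 1%:M -> nsq x = 1 ->
  `|qf (M *t G) x| <= opnorm M.
Proof.
move=> kpos GG x1.
have eT : M *t G = (M *t 1%:M) *m (1%:M *t G) by rewrite tensmx_mul mulmx1 mul1mx.
set y := (1%:M *t G) *m x.
have y1 : nsq y = 1.
  by rewrite -qf_adj ad_tens ad1 tensmx_mul mul1mx GG tens11 -nsq_qf.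
apply: le_trans (cs_abs _ x1) _.
rewrite eT -mulmxA -/y vnormE.
rewrite -(ger0_norm (opnorm_ge0 M kpos)) -sqrtr_sqr ler_sqrt ?sqr_ge0 //.
rewrite -qf_adj ad_tens ad1 tensmx_mul mul1mx qf_tens1.
rewrite -[X in _ <= X]mulr1 -y1 nsq_tens mulr_sumr; apply: ler_sum => b _.
by rewrite qf_adj opnorm_scale.
Qed.

End S.

Section S.
Variable R : realType.
Local Notation C := R[i].

Lemma Re0mul (z : C) : complex.Re (0 * z) = 0.
Proof. by rewrite mul0r. Qed.

Lemma sum_Re1 p (b : 'I_p) (g : 'I_p -> C) :
  \sum_b' complex.Re ((1%:M : 'M[C]_p) b b' * g b') = complex.Re (g b).
Proof.
rewrite (bigD1 b) //= mxE eqxx mulr1n mul1r big1 ?addr0 // => b' /negbTE.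
by rewrite mxE eq_sym => ->; rewrite mulr0n mul0r.
Qed.

Lemma qf_tensP k m (M : 'M[C]_k) (x : 'cV[C]_(k * (m + m))) :
  qf (M *t projP R m) x = \sum_(b < m) qf M (sl x (lshift m b)).
Proof.
rewrite qf_tens big_split_ord /= [X in _ + X]big1 ?addr0; last first.
  move=> b _; rewrite big_split_ord /= !big1 ?addr0 // => b' _.
    by rewrite /projP ?block_mxEdl ?block_mxEdr ?block_mxEul ?block_mxEur mxE mul0r.
  by rewrite /projP ?block_mxEdl ?block_mxEdr ?block_mxEul ?block_mxEur mxE mul0r.
apply: eq_bigr => b _; rewrite big_split_ord /= [X in _ + X]big1 ?addr0.
  by rewrite (eq_bigr _ (fun b' _ => congr1 (fun t => complex.Re (t * _))
     (block_mxEul _ _ _ _ b b'))) sum_Re1.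
by move=> b' _; rewrite /projP block_mxEur mxE mul0r.
Qed.

Lemma qf_tensQ k m (M : 'M[C]_k) (x : 'cV[C]_(k * (m + m))) :
  qf (M *t projQ R m) x = \sum_(b < m) qf M (sl x (rshift m b)).
Proof.
rewrite qf_tens big_split_ord /= [X in X + _]big1 ?add0r; last first.
  move=> b _; rewrite big_split_ord /= !big1 ?addr0 // => b' _.
    by rewrite /projQ ?block_mxEdl ?block_mxEdr ?block_mxEul ?block_mxEur mxE mul0r.
  by rewrite /projQ ?block_mxEdl ?block_mxEdr ?block_mxEul ?block_mxEur mxE mul0r.
apply: eq_bigr => b _; rewrite big_split_ord /= [X in X + _]big1 ?add0r.
  by rewrite (eq_bigr _ (fun b' _ => congr1 (fun t => complex.Re (t * _))
     (block_mxEdr _ _ _ _ b b'))) sum_Re1.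
by move=> b' _; rewrite /projQ block_mxEdl mxE mul0r.
Qed.

Lemma nsq_split k m (x : 'cV[C]_(k * (m + m))) :
  nsq x = \sum_(b < m) nsq (sl x (lshift m b)) + \sum_(b < m) nsq (sl x (rshift m b)).
Proof. by rewrite nsq_tens big_split_ord. Qed.

Lemma qf_tens_delta k p (M : 'M[C]_k) (b0 : 'I_p) x :
  qf (M *t delta_mx b0 b0) x = qf M (sl x b0).
Proof.
rewrite qf_tens (bigD1 b0) //= (bigD1 b0) //= mxE !eqxx mulr1n mul1r.
rewrite !big1 ?addr0 //.
  move=> b /negbTE hb; apply: big1 => b' _.
  by rewrite mxE hb /= mulr0n mul0r.
by move=> b' /negbTE hb; rewrite mxE hb andbF mulr0n mul0r.
Qed.

Lemma qf_x0 k (M : 'M[C]_k) : qf M 0 = 0.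
Proof. by rewrite /qf /dotc ad0 mul0mx mxE. Qed.

Lemma nsq0 k : nsq (0 : 'cV[C]_k) = 0.
Proof. by rewrite nsq_qf qf_x0. Qed.

End S.

Lemma sum_pairs (V : zmodType) d (f : 'I_d -> 'I_d -> V) :
  \sum_i \sum_j f i j =
  \sum_i f i i + \sum_(k < d) \sum_(l < d | (k < l)%N) (f k l + f l k).
Proof.
have e1 (i : 'I_d) : \sum_j f i j = f i i + \sum_(j < d | (i < j)%N) f i j
                                 + \sum_(j < d | (j < i)%N) f i j.
  rewrite [LHS](bigID (fun j : 'I_d => (i < j)%N)) /= addrC (bigD1 i) /=; last by rewrite ltnn.
  rewrite -addrA [X in _ + X = _]addrC addrA; congr (_ + _ + _).
  by apply: eq_bigl => j; rewrite -leqNgt ltn_neqAle andbC.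
rewrite (eq_bigr _ (fun i _ => e1 i)) !big_split /= -addrA; congr (_ + _).
rewrite [X in _ + X](eq_bigr (fun i : 'I_d => \sum_(j < d) (if (j < i)%N then f i j else 0)));
  last by move=> i _; rewrite big_mkcond.
rewrite [X in _ + X]exchange_big /= [X in _ + X](eq_bigr (fun j : 'I_d => \sum_(i < d | (j < i)%N) f i j));
  last by move=> j _; rewrite [RHS]big_mkcond.
by rewrite -big_split /=; apply: eq_bigr => k _; rewrite big_split.
Qed.

Lemma rearr (V : zmodType) (s1 s2 c g h g' p h' q : V) :
  (s1 + s2 + c) + g - h + (g' + p - 0) - (h' + 0 - q) =
  (s1 + p + (s2 + q)) + c + (g + g' - (h + h')).
Proof.
pose v := [:: s1; s2; c; g; - h; g'; p; q; - h'].
have L1 : (s1 + s2 + c) + g - h + (g' + p - 0) - (h' + 0 - q) =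
   \sum_(i <- [:: 0; 1; 2; 3; 4; 5; 6; 7; 8]%N) nth 0 v i.
  by rewrite !big_cons big_nil /= subr0 addr0 opprB addr0 !addrA.
have L2 : (s1 + p + (s2 + q)) + c + (g + g' - (h + h')) =
   \sum_(i <- [:: 0; 6; 1; 7; 2; 3; 5; 4; 8]%N) nth 0 v i.
  by rewrite !big_cons big_nil /= opprD addr0 !addrA.
by rewrite L1 L2; apply: perm_big.
Qed.

Lemma rearr2 (V : zmodType) (a b u v w : V) :
  a - u - (v - w) - (b - v - (u - w)) = a - b.
Proof.
pose l := [:: a; - u; - v; w; - b; v; u; - w].
have L1 : a - u - (v - w) - (b - v - (u - w)) =
   \sum_(i <- [:: 0; 1; 3; 2; 6; 7; 5; 4]%N) nth 0 l i.
  by rewrite !big_cons big_nil /= !opprB addr0 !addrA.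
have L2 : a - b + (u - u) + (v - v) + (w - w) =
   \sum_(i <- [:: 0; 4; 6; 1; 5; 2; 3; 7]%N) nth 0 l i.
  by rewrite !big_cons big_nil /= addr0 !addrA.
transitivity (a - b + (u - u) + (v - v) + (w - w)); last by rewrite !subrr !addr0.
by rewrite L1 L2; apply: perm_big.
Qed.

Section S.
Variable R : realType.
Local Notation C := R[i].

Lemma ad_scalar k (c : C) : mxadj (c%:M : 'M[C]_k) = (conjc c)%:M.
Proof.
by apply/matrixP => i j; rewrite !mxE rmorphMn eq_sym.
Qed.

Lemma shiftA_herm n d (A : 'I_d -> 'M[C]_n) lam i :
  is_hermitian (A i) -> mxadj (shiftA A lam i) = shiftA A lam i.
Proof. by move=> hA; rewrite /shiftA adB hA ad_scalar conjc_real. Qed.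

Lemma comm_shift n (X Y : 'M[C]_n) (c e : C) :
  (X - c%:M) *m (Y - e%:M) - (Y - e%:M) *m (X - c%:M) = X *m Y - Y *m X.
Proof.
rewrite !mulmxBl !mulmxBr.
rewrite [X *m e%:M]scalar_mxC [Y *m c%:M]scalar_mxC [e%:M *m c%:M]scalar_mxC.
exact: rearr2.
Qed.

Lemma key_identity n d m (Gamma : 'I_d -> 'M[C]_(m + m)) (A : 'I_d -> 'M[C]_n)
  (B : 'M[C]_n) (lam : 'I_d -> R) (nu : C) :
  is_clifford Gamma -> (forall i, is_hermitian (A i)) ->
  mxadj (localizer Gamma A B lam nu) *m localizer Gamma A B lam nu =
  (RQ A B lam nu *t projP R m + LQ A B lam nu *t projQ R m)
  + \sum_(k < d) \sum_(l < d | (k < l)%N)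
       ((A k *m A l - A l *m A k) *t (Gamma k *m Gamma l))
  + Fmat Gamma A B lam nu.
Proof.
move=> [hG [hG2 hGa]] hA.
have hGi i : mxadj (Gamma i) = Gamma i := hG i.
set P := projP R m; set Q := projQ R m.
set a := shiftA A lam; set b := shiftB B nu; set bd := mxadj b.
have ha i : mxadj (a i) = a i := shiftA_herm lam (hA i).
have hP : mxadj P = P.
  by rewrite /P /projP /mxadj map_block_mx tr_block_mx !map_mx0 map_mx1 !trmx0 trmx1.
have hQ : mxadj Q = Q.
  by rewrite /Q /projQ /mxadj map_block_mx tr_block_mx !map_mx0 map_mx1 !trmx0 trmx1.
have PP : P *m P = P by rewrite /P /projP mulmx_block !mulmx0 !mul0mx !addr0 mulmx1.
have QQ : Q *m Q = Q by rewrite /Q /projQ mulmx_block !mulmx0 !mul0mx ?addr0 ?add0r mulmx1.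
have PQ : P *m Q = 0 by rewrite /P /Q /projP /projQ mulmx_block !mulmx0 !mul0mx ?mulmx1 ?mul1mx ?addr0 ?add0r block_mx0.
have QP : Q *m P = 0 by rewrite /P /Q /projP /projQ mulmx_block !mulmx0 !mul0mx ?mulmx1 ?mul1mx ?addr0 ?add0r block_mx0.
have PQ1 : P + Q = 1%:M.
  by rewrite /P /Q /projP /projQ add_block_mx !addr0 !add0r -scalar_mx_block.
set S := \sum_(i < d) (a i *t Gamma i).
have eL : localizer Gamma A B lam nu = S + b *t P - bd *t Q by [].
have adL : mxadj (localizer Gamma A B lam nu) = S + bd *t P - b *t Q.
  rewrite eL adB adD ad_sum !ad_tens adK hP hQ; congr (_ + _ - _).
  by apply: eq_bigr => i _; rewrite ad_tens ha hGi.
have hSS : S *m S = (\sum_i a i *m a i) *t P + (\sum_i a i *m a i) *t Q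
   + \sum_(k < d) \sum_(l < d | (k < l)%N)
       ((A k *m A l - A l *m A k) *t (Gamma k *m Gamma l)).
  have -> : S *m S = \sum_i \sum_j ((a i *m a j) *t (Gamma i *m Gamma j)).
    rewrite /S mulmx_suml; apply: eq_bigr => i _; rewrite mulmx_sumr.
    by apply: eq_bigr => j _; rewrite tensmx_mul.
  rewrite sum_pairs; congr (_ + _).
    rewrite -tensmxDr PQ1 tensmx_suml; apply: eq_bigr => i _.
    by rewrite hG2.
  apply: eq_bigr => k _; apply: eq_bigr => l kl.
  have nkl : l != k by rewrite neq_ltn kl orbT.
  rewrite (hGa _ _ nkl) tensmxNr -tensmxNl -tensmxDl.
  by rewrite /a /shiftA comm_shift.
have hSY1 : S *m (b *t P) = \sum_i ((a i *m b) *t (Gamma i *m P)).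
  by rewrite /S mulmx_suml; apply: eq_bigr => i _; rewrite tensmx_mul.
have hSY2 : S *m (bd *t Q) = \sum_i ((a i *m bd) *t (Gamma i *m Q)).
  by rewrite /S mulmx_suml; apply: eq_bigr => i _; rewrite tensmx_mul.
have hX1S : (bd *t P) *m S = \sum_i mxadj ((a i *m b) *t (Gamma i *m P)).
  rewrite /S mulmx_sumr; apply: eq_bigr => i _.
  by rewrite tensmx_mul ad_tens !adM ha hGi hP.
have hX2S : (b *t Q) *m S = \sum_i mxadj ((a i *m bd) *t (Gamma i *m Q)).
  rewrite /S mulmx_sumr; apply: eq_bigr => i _.
  by rewrite tensmx_mul ad_tens !adM ha hGi hQ /bd adK.
have hX1Y1 : (bd *t P) *m (b *t P) = (bd *m b) *t P by rewrite tensmx_mul PP.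
have hX1Y2 : (bd *t P) *m (bd *t Q) = 0 by rewrite tensmx_mul PQ tensmx0.
have hX2Y1 : (b *t Q) *m (b *t P) = 0 by rewrite tensmx_mul QP tensmx0.
have hX2Y2 : (b *t Q) *m (bd *t Q) = (b *m bd) *t Q by rewrite tensmx_mul QQ.
rewrite adL eL mulmxBl mulmxDl !mulmxBr !mulmxDr.
rewrite hSS hSY1 hSY2 hX1S hX2S hX1Y1 hX1Y2 hX2Y1 hX2Y2.
rewrite /RQ /LQ -/a -/b -/bd !tensmxDl /Fmat; cbv zeta.
rewrite !big_split /=.
exact: rearr.
Qed.

End S.

Lemma sqrt_diff (R : rcfType) (a b s : R) :
  `|a - b| <= s -> `|Num.sqrt a - Num.sqrt b| <= Num.sqrt s.
Proof.
move=> h.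
have s0 : 0 <= s := le_trans (normr_ge0 _) h.
move: h; rewrite ler_norml => /andP[h1 h2].
have t0 := sqrtr_ge0 s; have t2 := sqr_sqrtr s0.
have sa0 := sqrtr_ge0 a; have sb0 := sqrtr_ge0 b.
move: t0 t2 sa0 sb0.
set sa := Num.sqrt a; set sb := Num.sqrt b; set t := Num.sqrt s.
move=> t0 t2 sa0 sb0.
rewrite ler_norml; apply/andP.
have [ha|ha] := lerP 0 a; have [hb|hb] := lerP 0 b.
- have ea := sqr_sqrtr ha; have eb := sqr_sqrtr hb.
  rewrite -/sa in ea; rewrite -/sb in eb.
  split; nra.
- have ea := sqr_sqrtr ha; have eb : sb = 0 by rewrite /sb ler0_sqrtr // ltW.
  rewrite -/sa in ea.
  split; nra.
- have eb := sqr_sqrtr hb; have ea : sa = 0 by rewrite /sa ler0_sqrtr // ltW.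
  rewrite -/sb in eb.
  split; nra.
- have eb : sb = 0 by rewrite /sb ler0_sqrtr // ltW.
  have ea : sa = 0 by rewrite /sa ler0_sqrtr // ltW.
  split; nra.
Qed.

Lemma ad_delta (R : realType) p (j0 : 'I_p) :
  mxadj (delta_mx j0 j0 : 'M[R[i]]_p) = delta_mx j0 j0.
Proof. by apply/matrixP => k l; rewrite !mxE conjc_nat andbC. Qed.

Lemma herm_RQ {R : realType} {n d} {A : 'I_d -> 'M[R[i]]_n} B lam nu :
  (forall i, is_hermitian (A i)) ->
  mxadj (RQ A B lam nu) = RQ A B lam nu /\ mxadj (LQ A B lam nu) = LQ A B lam nu.
Proof.
move=> hA; rewrite /RQ /LQ; move: (shiftB B nu) => b.
rewrite !adD !ad_sum !adM adK.
have e : \sum_i mxadj (shiftA A lam i *m shiftA A lam i) =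
         \sum_i (shiftA A lam i *m shiftA A lam i).
  by apply: eq_bigr => i _; rewrite adM shiftA_herm.
by rewrite e.
Qed.

Unset Implicit Arguments.

Theorem mainTheorem12 (R : realType) (n d m : nat)
  (Gamma : 'I_d -> 'M[R[i]]_(m + m)) (A : 'I_d -> 'M[R[i]]_n)
  (B : 'M[R[i]]_n) (lam : 'I_d -> R) (nu : R[i]) :
  (0 < n)%N -> (0 < d)%N -> (0 < m)%N ->
  is_clifford Gamma ->
  (forall i, is_hermitian (A i)) ->
  `| clifford_gap Gamma A B lam nu - quadratic_gap A B lam nu |
    <= Num.sqrt (\sum_(k < d) \sum_(l < d | (k < l)%N)
                   opnorm (A k *m A l - A l *m A k)
                 + opnorm (Fmat Gamma A B lam nu)).
Proof.
move=> npos dpos mpos hcl hA.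
have hcl' := hcl; move: hcl' => [hG [hG2 hGa]].
have hGi i : mxadj (Gamma i) = Gamma i := hG i.
set L := localizer Gamma A B lam nu.
set X := mxadj L *m L.
set Qm := Qmat A B lam nu.
set s := (\sum_(k < d) \sum_(l < d | (k < l)%N) opnorm (A k *m A l - A l *m A k)
          + opnorm (Fmat Gamma A B lam nu)).
set RQm := RQ A B lam nu; set LQm := LQ A B lam nu.
set Y := RQm *t projP R m + LQm *t projQ R m.
set Cm := \sum_(k < d) \sum_(l < d | (k < l)%N)
       ((A k *m A l - A l *m A k) *t (Gamma k *m Gamma l)).
set F := Fmat Gamma A B lam nu.
have eX : X = Y + Cm + F by rewrite /X /L key_identity.
have [hRQ hLQ] := herm_RQ B lam nu hA.
have Npos : (0 < n * (m + m))%N by rewrite muln_gt0 npos addn_gt0 mpos.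
have hX : mxadj X = X by rewrite /X adM adK.
have hQm : mxadj Qm = Qm.
  by rewrite /Qm /Qmat adD !ad_tens !ad_delta -/RQm -/LQm hRQ hLQ.
have [lowX [x0 [x01 qx0]] _] := spectral_bounds hX Npos.
have N2pos : (0 < n * 2)%N by rewrite muln_gt0 npos.
have [lowQ [z [z1 qz]] _] := spectral_bounds hQm N2pos.
have Ebound x : nsq x = 1 -> `|qf Cm x + qf F x| <= s.
  move=> x1; apply: le_trans (ler_normD _ _) _; apply: lerD; last first.
    exact: qf_opnorm.
  rewrite /Cm qf_sum; apply: le_trans (ler_norm_sum _ _ _) _.
  apply: ler_sum => k _; rewrite qf_sum; apply: le_trans (ler_norm_sum _ _ _) _.
  apply: ler_sum => l kl; apply: qf_tens_unitary => //.
  have nkl : l != k by rewrite neq_ltn kl orbT.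
  by rewrite adM !hGi -mulmxA (mulmxA (Gamma k)) hG2 mul1mx hG2.
have qfX x : qf X x = qf Y x + (qf Cm x + qf F x).
  by rewrite eX (qfD (Y + Cm) F) (qfD Y Cm) addrA.
have qfQm z' : qf Qm z' = qf RQm (sl z' 0) + qf LQm (sl z' 1).
  by rewrite /Qm /Qmat (qfD (RQ A B lam nu *t delta_mx 0 0) (LQ A B lam nu *t delta_mx 1 1)) !qf_tens_delta.
have nsq2 z' : nsq (z' : 'cV[R[i]]_(n * 2)) = nsq (sl z' 0) + nsq (sl z' 1).
  rewrite (nsq_tens z') big_ord_recl big_ord1.
  by congr (nsq (sl _ _) + nsq (sl _ _)); apply/val_inj.
have qfY x : qf Y x = \sum_(b < m) qf RQm (sl x (lshift m b))
                    + \sum_(b < m) qf LQm (sl x (rshift m b)).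
  by rewrite /Y qfD qf_tensP qf_tensQ.
set lQ := lambda_min Qm; set lX := lambda_min X.
have F3 x : lQ * nsq x <= qf Y x.
  rewrite qfY nsq_split mulrDr !mulr_sumr; apply: lerD; apply: ler_sum => b _.
  - set u := sl x (lshift m b).
    pose zz := mk (fun c : 'I_2 => if c == 0 then u else 0).
    have := lowQ zz; rewrite qfQm nsq2 !sl_mk /= nsq0 addr0 qf_x0 addr0.
    done.
  - set u := sl x (rshift m b).
    pose zz := mk (fun c : 'I_2 => if c == 0 then 0 else u).
    have := lowQ zz; rewrite qfQm nsq2 !sl_mk /= nsq0 add0r qf_x0 add0r.
    done.
pose o := Ordinal mpos.
pose x1 := mk (fun c : 'I_(m + m) => if c == lshift m o then sl z 0
                 else if c == rshift m o then sl z 1 else 0).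
have x1n : nsq x1 = 1.
  rewrite nsq_split -z1 nsq2 (bigD1 o) //= (bigD1 o (P := xpredT)) //=.
  rewrite !sl_mk !eqxx /= eq_rlshift !big1 ?addr0 //.
    by move=> b /negbTE hb; rewrite sl_mk eq_rshift hb eq_rlshift nsq0.
  by move=> b /negbTE hb; rewrite sl_mk eq_lshift hb eq_lrshift nsq0.
have x1q : qf Y x1 = lQ.
  rewrite qfY /lQ -qz qfQm (bigD1 o) //= (bigD1 o (P := xpredT)) //=.
  rewrite !sl_mk !eqxx /= eq_rlshift !big1 ?addr0 //.
    by move=> b /negbTE hb; rewrite sl_mk eq_rshift hb eq_rlshift qf_x0.
  by move=> b /negbTE hb; rewrite sl_mk eq_lshift hb eq_lrshift qf_x0.
have diff : `|lX - lQ| <= s.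
  rewrite ler_norml; apply/andP; split.
  - have := F3 x0; rewrite x01 mulr1 => h.
    have := Ebound x0 x01; rewrite ler_norml => /andP[e1 e2].
    have : lX = qf X x0 by rewrite qx0.
    rewrite qfX => ->; lra.
  - have := lowX x1; rewrite x1n mulr1 qfX x1q => h.
    have := Ebound x1 x1n; rewrite ler_norml => /andP[e1 e2].
    lra.
exact: sqrt_diff diff.
Qed.
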